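(* For every positive integer $n$, there exists a finite semigroup $S$ with a principal right ideal $A$ such that $\mathrm{H}_{\mathcal{R}}(S)=n$ and $\mathrm{H}_{\mathcal{R}}(A)=2n-1$.
   Context: For a semigroup $S$, $S^1$ denotes $S$ with an identity adjoined if necessary; a principal right ideal is a set of the form $aS^1$ with $a\in S$. Green's preorder on a semigroup $M$: $u\leq_{\mathcal{R}} v$ iff $uM^1\subseteq vM^1$; $\mathcal{R}$ is the associated equivalence; the $\mathcal{R}$-height $\mathrm{H}_{\mathcal{R}}(M)$ is the supremum of the cardinalities of chains in the poset of $\mathcal{R}$-classes. $\mathrm{H}_{\mathcal{R}}(A)$ is computed in $A$ as a semigroup. *)

(* Defs.v *)
From mathcomp Require Import all_boot.
Set Implicit Arguments. Unset Strict Implicit. Unset Printing Implicit Defensive.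

(* A finite semigroup is a finite type T with an associative operation op.
   A subsemigroup M of it is a subset closed under op; computations "in M"
   use M with the restricted operation. *)

Section Green.
Variables (T : finType) (op : T -> T -> T).

(* Green's R-preorder computed in the semigroup M (as a semigroup):
   u <=_R v  iff  u M^1 \subseteq v M^1  iff  u = v or u = v w for some w in M. *)
Definition Rle (M : {set T}) (u v : T) : bool :=
  (u == v) || [exists w in M, u == op v w].

Definition Rlt (M : {set T}) (u v : T) : bool := Rle M u v && ~~ Rle M v u.

(* a chain of R-classes of M of cardinality size s, given by representatives
   listed in strictly increasing order *)
Definition Rchain (M : {set T}) (s : seq T) : bool :=
  all (fun x => x \in M) s && sorted (Rlt M) s.

(* the R-height of M equals h (M finite, so the supremum is a maximum) *)
Definition R_height_eq (M : {set T}) (h : nat) : Prop :=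
  (exists s, Rchain M s /\ size s = h) /\
  (forall s, Rchain M s -> size s <= h).

Definition princ_right_ideal (a : T) : {set T} :=
  a |: [set op a s | s : T].
End Green.

(* Main.v *)
Require Import Defs.
From mathcomp Require Import all_boot.
From mathcomp Require Import zify.
Set Implicit Arguments. Unset Strict Implicit. Unset Printing Implicit Defensive.

Definition TT (m : nat) := (bool * 'I_m.+1 * bool)%type.

Definition gop (m : nat) (x y : TT m) : TT m :=
  (x.1.1, inord (minn (x.1.2 + (x.2 && ~~ y.1.1) + y.1.2) m), y.2).

Lemma gop_g m (x y : TT m) :
  ((gop x y).1.2 : nat) = minn (x.1.2 + (x.2 && ~~ y.1.1) + y.1.2) m.
Proof. by rewrite /gop /= inordK // ltnS geq_minr. Qed.

Lemma gop_assoc m : associative (@gop m).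
Proof.
move=> [[xi xg] xl] [[yi yg] yl] [[zi zg] zl].
rewrite /gop /=; congr (_, _, _); apply: val_inj; rewrite /= !inordK;
  try (rewrite ltnS; apply: geq_minr).
by case: xl; case: yi; case: yl; case: zi => /=; lia.
Qed.

Lemma sorted_bound (T : Type) (r : rel T) (rk : T -> nat) B s :
  (forall x y, r x y -> rk y < rk x) -> all (fun x => rk x <= B) s ->
  sorted r s -> size s <= B.+1.
Proof.
case: s => // x s Hr /= /andP[Hx _] Hp.
suff: size s <= rk x by lia.
elim: s x Hp {Hx} => // y s IH x /= /andP[hxy hp].
have := IH y hp; have := Hr _ _ hxy; lia.
Qed.

Lemma sorted_mkseq (T : Type) (r : rel T) (h : nat -> T) N :
  (forall k, k.+1 < N -> r (h k) (h k.+1)) -> sorted r (mkseq h N).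
Proof.
rewrite /mkseq.
suff: forall a, (forall k, a <= k -> k.+1 < a + N -> r (h k) (h k.+1)) ->
  sorted r (map h (iota a N)).
  by move=> H H'; apply: H => k _; apply: H'.
elim: N => [|N IH] a H //=.
case: N IH H => [|N] IH H //=.
rewrite H //; last by lia.
have := IH a.+1; rewrite /= => -> // k hk hk2; apply: H; lia.
Qed.

Lemma RleS_inv m M (u v : TT m) :
  Rle (@gop m) M u v -> u.1.1 = v.1.1 /\ v.1.2 <= u.1.2.
Proof.
case/orP => [/eqP -> // | /existsP [w /andP [_ /eqP ->]]].
split => //; rewrite gop_g; have := ltn_ord v.1.2.
case: (_ && _) => /=; lia.
Qed.

Definition aa m : TT m := (false, ord0, false).

Lemma inA m (w : TT m) : (w \in princ_right_ideal (@gop m) (aa m)) = ~~ w.1.1.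
Proof.
apply/idP/idP.
  case/setU1P => [-> // | /imsetP [s _ ->] //].
move=> hw; apply/setU1P; right; apply/imsetP; exists (false, w.1.2, w.2) => //.
move: w hw => [[[] wg] wl] //= _.
have h := ltn_ord wg.
rewrite /gop /=; congr (_, _, _); apply: val_inj; rewrite /= inordK; lia.
Qed.

Definition rA m (u : TT m) : nat :=
  if (u.1.2 : nat) == m then 2 * m else 2 * u.1.2 + u.2.

Lemma RleA_rank m (u v : TT m) :
  Rle (@gop m) (princ_right_ideal (@gop m) (aa m)) u v ->
  u.1.1 = v.1.1 /\ rA v <= rA u.
Proof.
case/orP => [/eqP -> // | /existsP [w /andP [hw /eqP ->]]].
split => //; rewrite inA in hw.
rewrite /rA gop_g (negbTE hw) andbT.
have := ltn_ord v.1.2; have := ltn_ord w.1.2.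
case: (v.2) => /=; case: eqP => /=; case: eqP => /=; lia.
Qed.

Lemma RltA_rank m (u v : TT m) :
  Rlt (@gop m) (princ_right_ideal (@gop m) (aa m)) u v -> rA v < rA u.
Proof.
move=> /andP [h1 h2]; have [hi hr] := RleA_rank h1.
rewrite ltn_neqAle hr andbT; apply/negP => /eqP E.
move/negP: h2; apply; move: u v hi E {h1 hr} => [[ui ug] ul] [[vi vg] vl] /= <-.
rewrite /rA /=.
have := ltn_ord ug; have := ltn_ord vg.
case: eqP => hv; case: eqP => hu.
- move=> _ _ _; apply/orP; right; apply/existsP; exists (false, ord0, vl).
  rewrite inA /=; apply/eqP; rewrite /gop /=; congr (_, _, _); apply: val_inj.
  rewrite /= inordK; lia.
- case: (ul); lia.
- case: (vl); lia.
- move=> _ _ E; apply/orP; left; apply/eqP.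
  have eg : vg = ug by apply: val_inj => /=; case: (ul) E; case: (vl) => /=; lia.
  have el : vl = ul by move: E; rewrite eg; case: (ul); case: (vl) => /=; lia.
  by rewrite eg el.
Qed.

Theorem corollary4p6 :
  forall n : nat, 0 < n ->
  exists (T : finType) (op : T -> T -> T),
    associative op /\
    exists a : T,
      R_height_eq op [set: T] n /\
      R_height_eq op (princ_right_ideal op a) (2 * n - 1).
Proof.
move=> [|m] // _.
exists (TT m), (@gop m); split; first exact: gop_assoc.
exists (aa m); split.
- split.
  + exists (mkseq (fun k => ((false, inord (m - k), false) : TT m)) m.+1).
    split; last by rewrite size_mkseq.
    apply/andP; split; first by apply/allP => x _; rewrite in_setT.
    apply: sorted_mkseq => k hk; apply/andP; split.
      apply/orP; right; apply/existsP; exists (false, inord 1, false).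
      rewrite in_setT /=; apply/eqP; rewrite /gop /=; congr (_, _, _).
      apply: val_inj; rewrite /= !inordK; lia.
    apply/negP => /RleS_inv [_]; rewrite /= !inordK; lia.
  + move=> s /andP [_ hs].
    apply: (@sorted_bound _ _ (fun x : TT m => nat_of_ord x.1.2)) hs.
      move=> x y /andP [h1 h2]; have [hi hg] := RleS_inv h1.
      rewrite ltn_neqAle hg andbT; apply/negP => /eqP E.
      move/negP: h2; apply; apply/orP; right; apply/existsP.
      exists (true, ord0, y.2); rewrite in_setT; apply/eqP.
      move: x y hi E {h1 hg} => [[xi xg] xl] [[yi yg] yl] /= -> E.
      rewrite /gop /=; congr (_, _, _); apply: val_inj.
      rewrite /= inordK andbF /=; have := ltn_ord xg; lia.
    by apply/allP => x _; rewrite -ltnS ltn_ord.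
- have -> : 2 * m.+1 - 1 = (2 * m).+1 by lia.
  split.
  + pose e (k : nat) : TT m := (false, inord (k./2), odd k).
    have rAe k : k <= 2 * m -> rA (e k) = k.
      move=> hk; rewrite /rA /e /= inordK; last by lia.
      case: eqP => h; first by (have := odd_double_half k); lia.
      by (have := odd_double_half k); lia.
    exists (mkseq (fun k => e (2 * m - k)) (2 * m).+1).
    split; last by rewrite size_mkseq.
    apply/andP; split; first by apply/allP => x /mapP [k _ ->]; rewrite inA.
    apply: sorted_mkseq => k hk.
    have -> : 2 * m - k = (2 * m - k.+1).+1 by lia.
    set j := 2 * m - k.+1.
    have hj : j < 2 * m by rewrite /j; lia.
    apply/andP; split; last first.
      apply/negP => /RleA_rank [_]; rewrite !rAe; lia.
    apply/orP; right; apply/existsP; exists (false, ord0, odd j.+1).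
    rewrite inA /=; apply/eqP; rewrite /e /gop /=; congr (_, _, _).
    apply: val_inj; rewrite /= !inordK; try lia.
  + move=> s /andP [hA hs].
    apply: (@sorted_bound _ _ (@rA m)) hs; first exact: RltA_rank.
    apply/allP => x _; rewrite /rA; case: eqP => // h.
    have := ltn_ord x.1.2; case: (x.2) => /=; lia.
Qed.
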